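(* Let $p$ be an odd prime and $\lambda$ a nonempty BG-partition. The following are equivalent: (1) $\varepsilon^*_\lambda=0$; (2) $a^*_\lambda$ is even; (3) $\mathrm{Rim}^*_p(\lambda)$ contains no diagonal node $(i,i)$; (4) $p\mid a^*_\lambda$.
   Context: Partitions: $\lambda=(\lambda_1\ge\lambda_2\ge\cdots)$ with finitely many nonzero parts; $l(\lambda)$ = number of nonzero parts; Young diagram $[\lambda]=\{(i,j): i\ge1, 1\le j\le\lambda_i\}$ ($i$ = row, increasing downward). $\lambda'$ is the conjugate; self-conjugate means $\lambda=\lambda'$. $k(\lambda)=\max\{i:\lambda_i\ge i\}$; diagonal nodes are $(i,i)$, $1\le i\le k(\lambda)$; hook length $h_{ij}=\lambda_i+\lambda'_j-i-j+1$. A BG-partition is a self-conjugate partition with $p\nmid h_{ii}$ for all $1\le i\le k(\lambda)$. Rim and $p$-rim: the rim is the set of nodes $(i,j)\in[\lambda]$ with $(i+1,j+1)\notin[\lambda]$. Label rim nodes $1,2,\dots$ along the rim path from $(1,\lambda_1)$ to $(l(\lambda),1)$. The first $p$-segment is the rim nodes labelled $1,\dots,p$ (or all if fewer). If the last node $(i,j)$ of a $p$-segment lies in the last row, stop; otherwise with $l$ the smallest label in row $i+1$ the next $p$-segment is the rim nodes labelled $l,\dots,l+p-1$ (or up to the last). The $p$-rim is the union of the $p$-segments. $p$-rim*: $U_\lambda=\{(i,j)\in p\text{-rim of }\lambda: i\le j\}$, $L_\lambda=\{(j,i):(i,j)\in U_\lambda\}$, $\mathrm{Rim}^*_p(\lambda)=U_\lambda\cup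 L_\lambda$, $a^*_\lambda=\#\mathrm{Rim}^*_p(\lambda)$, $\varepsilon^*_\lambda=a^*_\lambda\bmod 2$. *)

(* Defs.v *)
(* Partitions as nonincreasing sequences of positive nats;
   lambda_i = nth 0 s i.-1 (rows are 1-indexed); nodes are pairs (i, j). *)
From mathcomp Require Import all_boot.
Set Implicit Arguments. Unset Strict Implicit. Unset Printing Implicit Defensive.

Definition node := (nat * nat)%type.

Definition is_partition (s : seq nat) : bool :=
  sorted geq s && all (fun x => 0 < x) s.

Definition part (s : seq nat) (i : nat) : nat := nth 0 s i.-1.

Definition len (s : seq nat) : nat := size s.

Definition in_diag (s : seq nat) (x : node) : bool :=
  [&& 1 <= x.1, 1 <= x.2 & x.2 <= part s x.1].

Definition conjugate (s : seq nat) : seq nat :=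
  mkseq (fun j => count (fun x => j.+1 <= x) s) (head 0 s).

Definition self_conjugate (s : seq nat) : bool := conjugate s == s.

Definition kdiag (s : seq nat) : nat :=
  \max_(i < size s | i.+1 <= part s i.+1) i.+1.

Definition hook (s : seq nat) (i j : nat) : nat :=
  part s i + part (conjugate s) j + 1 - i - j.

Definition BG_partition (p : nat) (s : seq nat) : bool :=
  [&& is_partition s, self_conjugate s &
      all (fun i => ~~ (p %| hook s i i)) (iota 1 (kdiag s))].

Definition is_rim (s : seq nat) (x : node) : bool :=
  in_diag s x && ~~ in_diag s (x.1.+1, x.2.+1).

(* all nodes of [lambda], listed row by row (top to bottom), each row from
   right to left; the rim nodes in this order are exactly the rim path from
   (1, lambda_1) to (l(lambda), 1). *)
Definition diag_nodes (s : seq nat) : seq node :=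
  flatten [seq [seq (i, j) | j <- rev (iota 1 (part s i))] | i <- iota 1 (len s)].

(* rim nodes in path order: label t+1 is the t-th entry (0-based) *)
Definition rim_seq (s : seq nat) : seq node := filter (is_rim s) (diag_nodes s).

Fixpoint psegs (p : nat) (s : seq nat) (fuel st : nat) : seq node :=
  match fuel with
  | 0 => [::]
  | f.+1 =>
      let rs := rim_seq s in
      let seg := take p (drop st rs) in
      if seg == [::] then [::] else
      let i := (last (0, 0) seg).1 in
      if i == len s then seg
      else seg ++ psegs p s f (find (fun x : node => x.1 == i.+1) rs)
  end.

Definition prim (p : nat) (s : seq nat) : seq node :=
  psegs p s (size (rim_seq s)).+1 0.

Definition U_set (p : nat) (s : seq nat) : seq node :=
  [seq x <- prim p s | x.1 <= x.2].

Definition L_set (p : nat) (s : seq nat) : seq node :=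
  [seq (x.2, x.1) | x <- U_set p s].

Definition rim_star (p : nat) (s : seq nat) : seq node :=
  undup (U_set p s ++ L_set p s).

Definition a_star (p : nat) (s : seq nat) : nat := size (rim_star p s).

Definition eps_star (p : nat) (s : seq nat) : nat := a_star p s %% 2.

(* Main.v *)
Require Import Defs.
From mathcomp Require Import all_boot zify.
Set Implicit Arguments. Unset Strict Implicit. Unset Printing Implicit Defensive.

Section Part.
Variable s : seq nat.
Hypothesis Hps : is_partition s.
Hypothesis Hl : 0 < size s.
Local Notation lam i := (part s i).
Local Notation k := (kdiag s).

Lemma part_mono i j : i <= j -> lam j <= lam i.
Proof.
move=> hij; rewrite /part.
case: (ltnP j.-1 (size s)) => hj; last by rewrite (nth_default 0 hj).
case/andP: Hps => hs _.
have := sorted_leq_nth (leT := geq) _ _ 0 hs; apply => //.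
- by move=> a b c /= h1 h2; apply: leq_trans h2 h1.
- by move=> a /=.
- by rewrite inE; case: i hij; case: j hj => //= *; lia.
- by case: i hij; case: j hj => //= *; lia.
Qed.

Lemma part_pos i : 1 <= i <= size s -> 0 < lam i.
Proof.
move=> /andP[h1 h2]; case/andP: Hps => _ /allP; apply; rewrite /part; apply: mem_nth; by case: i h1 h2.
Qed.

Lemma part_0 i : size s < i -> lam i = 0.
Proof. by move=> hi; rewrite /part nth_default //; lia. Qed.

Lemma part_size i : 0 < lam i -> i.-1 < size s.
Proof. move=> h; case: ltnP => // hi; by rewrite /part nth_default in h. Qed.

Lemma kdiag_ge i : 1 <= i -> i <= lam i -> i <= k.
Proof.
move=> h1 h2.
have hi : i.-1 < size s by apply: part_size; lia.
have := @leq_bigmax_cond _ (fun j : 'I_(size s) => j.+1 <= part s j.+1) (fun j : 'I_(size s) => j.+1) (Ordinal hi).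
rewrite /kdiag /= prednK //.
by apply.
Qed.

Lemma kdiag_spec : 1 <= k /\ k <= lam k.
Proof.
have hA : 0 < #|[pred j : 'I_(size s) | j.+1 <= part s j.+1]|.
  apply/card_gt0P; exists (Ordinal Hl); rewrite inE /=.
  by have := part_pos (i := 1); rewrite Hl; apply.
have [i0 Hi0 E] := eq_bigmax_cond (fun j : 'I_(size s) => j.+1) hA.
have -> : k = i0.+1 by rewrite /kdiag -E.
by rewrite inE /= in Hi0.
Qed.

Lemma kdiag_le_size : k <= size s.
Proof. have [h1 h2] := kdiag_spec. have := part_size (i := k); lia. Qed.

Lemma lam_le_k i : 1 <= i <= k -> k <= lam i.
Proof. move=> h; have [h1 h2] := kdiag_spec; have := part_mono (i := i) (j := k); lia. Qed.

Lemma lam_gt_k i : k < i -> lam i < i.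
Proof. move=> h; case: (ltnP (lam i) i) => // h2; have := kdiag_ge (i := i); lia. Qed.

End Part.

Definition ltn_node (x y : node) := (x.1 < y.1) || ((x.1 == y.1) && (y.2 < x.2)).

Lemma pw_flat (f : nat -> seq nat) a n :
  (forall i, pairwise (fun x y => y < x) (f i)) ->
  pairwise ltn_node (flatten [seq [seq (i, j) | j <- f i] | i <- iota a n]).
Proof.
move=> hf; elim: n a => [|n IH] a //=.
rewrite pairwise_cat IH andbT; apply/andP; split.
  apply/allrelP => x y /mapP [j _ ->] /flattenP [t /mapP [i hi ->]] /mapP [j' _ ->].
  by rewrite /ltn_node /=; rewrite mem_iota in hi; case/andP: hi => ->.
rewrite pairwise_map; apply: sub_pairwise (hf a) => x y /= h.
by rewrite /ltn_node /= eqxx h orbT.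
Qed.

Lemma pw_rev_iota m n : pairwise (fun x y => y < x) (rev (iota m n)).
Proof.
rewrite -sorted_pairwise; first by rewrite rev_sorted; exact: iota_ltn_sorted.
by move=> a b c h1 h2; apply: ltn_trans h2 h1.
Qed.

Lemma ltn_node_irr : irreflexive ltn_node.
Proof. by move=> x; rewrite /ltn_node ltnn eqxx ltnn. Qed.

Lemma ltn_node_trans : transitive ltn_node.
Proof.
move=> y x z; rewrite /ltn_node.
case/orP => [h1|/andP [/eqP e1 h1]]; case/orP => [h2|/andP [/eqP e2 h2]].
- by rewrite (ltn_trans h1 h2).
- by rewrite -e2 h1.
- by rewrite e1 h2.
- by rewrite e1 e2 eqxx (ltn_trans h2 h1) orbT.
Qed.

Lemma ltn_node_row x y : ltn_node x y -> x.1 <= y.1.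
Proof. by rewrite /ltn_node => /orP [/ltnW //|/andP [/eqP -> _]]. Qed.

Lemma count_iota_ge m n : 0 < m -> count (fun j => m <= j) (iota 1 n) = n.+1 - m.
Proof.
move=> hm; elim: n => [|n IH]; first by move=> /=; lia.
have -> : iota 1 n.+1 = iota 1 n ++ [:: n.+1].
  by rewrite -(addn1 n) iotaD add1n addn1.
rewrite count_cat IH /=; lia.
Qed.

Lemma sumn_map0 (f : nat -> nat) t : (forall i, i \in t -> f i = 0) -> sumn (map f t) = 0.
Proof.
elim: t => //= a t IH h; rewrite h ?inE ?eqxx // IH // => i hi; apply: h; by rewrite inE hi orbT.
Qed.

Section Rim.
Variable s : seq nat.
Hypothesis Hps : is_partition s.
Hypothesis Hl : 0 < size s.
Local Notation lam i := (part s i).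
Local Notation k := (kdiag s).
Local Notation rs := (rim_seq s).

Lemma rs_pw : pairwise ltn_node rs.
Proof. apply: pairwise_filter; apply: pw_flat => i; exact: pw_rev_iota. Qed.

Lemma rs_uniq : uniq rs.
Proof. exact: pairwise_uniq ltn_node_irr rs_pw. Qed.

Lemma mem_rs x : (x \in rs) = is_rim s x.
Proof.
rewrite mem_filter; case E: (is_rim s x) => //=.
case: x E => i j; rewrite /is_rim /in_diag /= => /andP [/and3P [h1 h2 h3] _].
apply/flattenP; exists [seq (i, j) | j <- rev (iota 1 (part s i))].
  apply/mapP; exists i => //; rewrite mem_iota.
  have := part_size (s := s) (i := i); case: i h1 h3 => //= i _ h3 h; have := h ltac:(lia); rewrite /len; lia.
apply/mapP; exists j => //; rewrite mem_rev mem_iota; lia.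
Qed.

Lemma row_mono x0 a b : a <= b -> b < size rs -> (nth x0 rs a).1 <= (nth x0 rs b).1.
Proof.
move=> hab hb; rewrite leq_eqVlt in hab; case/orP: hab => [/eqP -> //|hab].
apply: ltn_node_row; move/pairwiseP: rs_pw; apply => //; rewrite inE; lia.
Qed.

Let G i := (lam i).+1 - maxn i (lam i.+1).

Lemma sum_tail n a : k < a -> sumn [seq G i | i <- iota a n] = 0.
Proof.
move=> ha; apply: sumn_map0 => i; rewrite mem_iota => /andP [h1 _].
have := @lam_gt_k s Hps Hl (i); rewrite /G; lia.
Qed.

Lemma sum_mid n a : 1 <= a <= k -> k < a + n -> sumn [seq G i | i <- iota a n] = lam a - a + 1.
Proof.
elim: n a => [|n IH] a ha hn; first lia.
rewrite /= -/(iota _ _).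
case: (ltnP a k) => hak.
  rewrite IH; [|lia|lia].
  have h1 := @lam_le_k s Hps Hl (a.+1); have h2 := @part_mono s Hps Hl a a.+1.
  rewrite /G; lia.
have hk : a = k by lia.
rewrite sum_tail; last lia.
have h1 := @lam_gt_k s Hps Hl (a.+1); have h2 := @lam_le_k s Hps Hl (a).
rewrite /G; lia.
Qed.

Lemma count_up r : 1 <= r <= k ->
  count (fun x : node => (x.1 <= x.2) && (r <= x.1)) rs = lam r - r + 1.
Proof.
move=> hr.
rewrite count_filter /diag_nodes count_flatten -map_comp.
have -> : [seq (count (predI (fun x : node => (x.1 <= x.2) && (r <= x.1)) (is_rim s))
                 \o (fun i : nat => [seq (i, j) | j <- rev (iota 1 (part s i))])) i | i <- iota 1 (len s)]
        = [seq (if r <= i then G i else 0) | i <- iota 1 (len s)].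
  apply/eq_in_map => i; rewrite mem_iota => /andP [hi1 hi2] /=.
  rewrite count_map count_rev.
  rewrite (eq_in_count (a2 := fun j => (r <= i) && (maxn i (part s i.+1) <= j))); last first.
    move=> j; rewrite mem_iota => /andP [hj1 hj2].
    rewrite /preim /predI /= /is_rim /in_diag /=.
    case: (r <= i); rewrite ?andbF ?andbT //=; lia.
  case: (r <= i) => //=; last by rewrite count_pred0.
  rewrite count_iota_ge /G //; lia.
have hk := kdiag_le_size Hps Hl.
have -> : len s = (r.-1) + (len s - r.-1) by rewrite /len; lia.
rewrite iotaD map_cat sumn_cat sumn_map0; last first.
  by move=> i; rewrite mem_iota => /andP [h1 h2]; case: ifP => //; lia.
rewrite add0n (_ : 1 + r.-1 = r); last lia.
rewrite (_ : map _ _ = map G (iota r (len s - r.-1))); last by apply/eq_in_map => i; rewrite mem_iota => /andP [-> _].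
rewrite sum_mid //; rewrite /len; lia.
Qed.

End Rim.

Lemma split_closed (T : eqType) (r : rel T) (a : pred T) (t : seq T) :
  pairwise r t -> (forall x y, x \in t -> y \in t -> r x y -> a y -> a x) ->
  t = filter a t ++ filter (predC a) t.
Proof.
elim: t => //= x t IH /andP [hx ht] hc.
have hc' : forall x y, x \in t -> y \in t -> r x y -> a y -> a x.
  by move=> u v hu hv; apply: hc; rewrite inE ?hu ?hv orbT.
case E: (a x) => /=; first by rewrite -IH.
have -> : filter a t = [::].
  apply/eqP; rewrite -size_eq0 size_filter; apply/eqP; apply/eqP; rewrite -leqn0 leqNgt -has_count.
  apply/hasP => -[y hy ay]; have := hc x y; rewrite inE eqxx /= inE hy orbT E => h.
  by have := h isT isT ((allP hx) y hy) ay.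
rewrite /=; congr (_ :: _); symmetry; apply/all_filterP/allP => y hy /=.
apply/negP => ay; have := hc x y; rewrite inE eqxx /= inE hy orbT E => h.
by have := h isT isT ((allP hx) y hy) ay.
Qed.

Lemma max_last (T : eqType) (r : rel T) (t : seq T) d :
  irreflexive r -> transitive r -> pairwise r t -> d \in t ->
  (forall x, x \in t -> x != d -> r x d) -> exists t', t = rcons t' d.
Proof.
move=> hirr htr; case/lastP: t => [//|t y] hpw hd hx.
case E: (y == d); first by move/eqP: E => ->; exists t.
have hyd := hx y; rewrite mem_rcons inE eqxx E /= in hyd; have {}hyd := hyd isT isT.
rewrite mem_rcons inE eq_sym E /= in hd.
move: hpw; rewrite -cats1 pairwise_cat => /and3P [/allrelP h _ _].
have := h d y hd; rewrite inE eqxx => /(_ isT) hdy.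
by have := htr _ _ _ hdy hyd; rewrite hirr.
Qed.

Lemma lastmax (t : seq node) x : pairwise ltn_node t -> x \in t -> x.1 <= (last (0,0) t).1.
Proof.
case/lastP: t => [//|t y]; rewrite last_rcons -cats1 pairwise_cat => /and3P [/allrelP h _ _].
rewrite mem_cat inE => /orP [hx|/eqP -> //].
by apply: ltn_node_row; apply: h; rewrite // inE.
Qed.

Section Main.
Variable p : nat.
Variable s : seq nat.
Hypothesis Hps : is_partition s.
Hypothesis Hl : 0 < size s.
Hypothesis Hp : 0 < p.
Local Notation lam i := (part s i).
Local Notation k := (kdiag s).
Local Notation rs := (rim_seq s).
Let up := fun x : node => x.1 <= x.2.
Let d : node := (k, k).
Let c (r : nat) := lam r - r + 1.
Let row (r : nat) := fun x : node => x.1 == r.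

Lemma rim_row x : x \in rs -> 1 <= x.1.
Proof. by rewrite mem_rs // /is_rim /in_diag => /andP [/and3P []]. Qed.

Lemma up_row x : x \in rs -> up x -> x.1 <= k.
Proof.
rewrite mem_rs // /is_rim /in_diag /up => /andP [/and3P [h1 h2 h3] _] h.
apply: kdiag_ge => //; exact: leq_trans h h3.
Qed.

Lemma down_closed x y : x \in rs -> y \in rs -> ltn_node x y -> up y -> up x.
Proof.
move=> hx hy hxy hupy; have hyk := up_row hy hupy.
move: hx; rewrite mem_rs // /is_rim /in_diag /up => /andP [/and3P [h1 h2 h3] h4].
move: hxy; rewrite /ltn_node => /orP [hlt|/andP [/eqP e hlt]].
  have hk := @lam_le_k s Hps Hl x.1.+1.
  have : ~~ (x.2 < lam x.1.+1) by exact: h4.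
  rewrite -leqNgt => h5.
  have h6 : x.1.+1 <= k := leq_trans hlt hyk.
  have h7 := hk h6.
  exact: leq_trans (ltnW h6) (leq_trans h7 h5).
by move: hupy; rewrite /up; lia.
Qed.

Lemma d_in : d \in rs.
Proof.
have [h1 h2] := kdiag_spec Hps Hl; have h3 := @lam_gt_k s Hps Hl k.+1.
rewrite mem_rs // /is_rim /in_diag /= h1 h2 /=; apply/negP => h; lia.
Qed.

Lemma diag_d x : x \in rs -> x.1 = x.2 -> x = d.
Proof.
case: x => i j /= hx e; subst j; have hk : i <= k := up_row hx (leqnn i).
move: hx; rewrite mem_rs // /is_rim /in_diag /= => /andP [/and3P [h1 _ h3] h4].
case: (ltnP i k) => hik; last by rewrite /d; congr pair; lia.
have := @lam_le_k s Hps Hl i.+1.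
have : ~~ (i < lam i.+1) by exact: h4.
rewrite -leqNgt; lia.
Qed.

Definition Pl := filter up rs.
Definition Ql := filter (predC up) rs.

Lemma rs_split : rs = Pl ++ Ql.
Proof. apply: split_closed (rs_pw s) _ => x y hx hy; exact: down_closed. Qed.

Lemma Pl_last : exists P', Pl = rcons P' d.
Proof.
apply: (max_last ltn_node_irr ltn_node_trans); first exact: pairwise_filter (rs_pw s).
  by rewrite mem_filter d_in /up /= leqnn.
move=> x; rewrite mem_filter => /andP [hu hx] hne.
have := up_row hx hu; rewrite /ltn_node /= leq_eqVlt => /orP [/eqP e|->//].
move: hx hu hne e; case: x => a b /= _ hu hne e; subst a.
have hu' : k <= b := hu.
rewrite eqxx ltnn /= ltn_neqAle hu' andbT; apply: contra hne => /eqP <-; by [].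
Qed.

Lemma drop_row (r : nat) (x : node) : x \in drop (find (row r) rs) rs -> r <= x.1.
Proof.
move=> hx.
have hlt : find (row r) rs < size rs.
  case: ltnP => // h; by rewrite drop_oversize in hx.
have := nth_find (0,0) (a := row r) (s := rs); rewrite has_find => /(_ hlt) /eqP hr.
have hi := nth_index (0,0) hx; rewrite nth_drop in hi.
have hsz : find (row r) rs + index x (drop (find (row r) rs) rs) < size rs.
  have h : index x (drop (find (row r) rs) rs) < size rs - find (row r) rs by rewrite -size_drop index_mem.
  lia.
have := @row_mono s Hps Hl (0,0) _ _ (leq_addr (index x (drop (find (row r) rs) rs)) (find (row r) rs)) hsz.
by rewrite hi hr.
Qed.

Lemma take_row (r : nat) (x : node) : r <= k -> 1 <= r -> x \in take (find (row r) rs) rs -> x.1 < r.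
Proof.
move=> hrk hr1 hx.
have hin : (r, lam r) \in rs.
  have h1 := @lam_le_k s Hps Hl r; have h2 := @part_mono s Hps Hl r r.+1 (leqnSn _).
  rewrite mem_rs // /is_rim /in_diag /= hr1 /=.
  have -> : 0 < lam r by lia.
  rewrite leqnn /=; apply/negP => h; lia.
have hhas : has (row r) rs by apply/hasP; exists (r, lam r) => //; rewrite /row eqxx.
have hlt := hhas; rewrite has_find in hlt.
have := nth_find (0,0) hhas => /eqP hr.
have hidx : index x (take (find (row r) rs) rs) < find (row r) rs.
  have := index_mem x (take (find (row r) rs) rs); rewrite hx size_take hlt => h; exact: h.
have hi := nth_index (0,0) hx; rewrite nth_take in hi; last exact: hidx.
have hb := before_find (0,0) hidx; rewrite hi /row in hb.
have := @row_mono s Hps Hl (0,0) _ _ (ltnW hidx) hlt; rewrite hi hr.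
by rewrite leq_eqVlt hb.
Qed.

Lemma pos (r : nat) : 1 <= r <= k ->
  find (row r) rs < size Pl /\ size Pl - find (row r) rs = c r.
Proof.
move=> /andP [hr1 hrk]; set st := find (row r) rs.
have hcnt := @count_up s Hps Hl r (introT andP (conj hr1 hrk)).
have E1 : count (fun x : node => (x.1 <= x.2) && (r <= x.1)) rs = count up (drop st rs).
  rewrite -{1}(cat_take_drop st rs) count_cat.
  rewrite (eq_in_count (a2 := pred0)); last first.
    move=> x hx; have := take_row hrk hr1 hx; rewrite /= ltnNge => /negbTE ->; by rewrite andbF.
  rewrite count_pred0 add0n; apply: eq_in_count => x hx.
  by rewrite (drop_row hx) andbT.
have hc1 : 1 <= c r by rewrite /c; lia.
have E2 : st < size Pl.
  case: (ltnP st (size Pl)) => // h.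
  move: E1; rewrite hcnt rs_split drop_cat ltnNge h /= /Ql.
  rewrite (eq_in_count (a2 := pred0)) ?count_pred0; first by rewrite /c; lia.
  by move=> x /mem_drop; rewrite mem_filter => /andP [/negbTE -> _].
split => //.
move: E1; rewrite hcnt rs_split drop_cat E2 count_cat.
have -> : count up (drop st Pl) = size (drop st Pl).
  apply/eqP; rewrite -all_count; apply/allP => x /mem_drop; by rewrite mem_filter => /andP [].
have -> : count up Ql = 0.
  rewrite (eq_in_count (a2 := pred0)) ?count_pred0 //.
  by move=> x; rewrite mem_filter => /andP [/negbTE -> _].
by rewrite size_drop addn0.
Qed.

Lemma psegsS f st : psegs p s f.+1 st =
  let seg := take p (drop st rs) in
  if seg == [::] then [::] else
  if (last (0, 0) seg).1 == len s then seg
  else seg ++ psegs p s f (find (fun x : node => x.1 == (last (0, 0) seg).1.+1) rs).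
Proof. by []. Qed.

Lemma psegs_sub f st x : x \in psegs p s f st -> x \in rs.
Proof.
elim: f st => [//|f IH] st; rewrite psegsS /=.
case: ifP => // _; case: ifP => [_ /mem_take /mem_drop //|_].
by rewrite mem_cat => /orP [/mem_take /mem_drop|/IH].
Qed.

Lemma last_in (t : seq node) : t != [::] -> last (0,0) t \in t.
Proof. by case: t => // y t _ /=; apply: mem_last. Qed.

Lemma seg_pw st : pairwise ltn_node (take p (drop st rs)).
Proof.
apply: subseq_pairwise (rs_pw s); apply: subseq_trans (take_subseq _ _) (drop_subseq _ _).
Qed.

Lemma psegs_row f (r : nat) (x : node) : x \in psegs p s f (find (row r) rs) -> r <= x.1.
Proof.
elim: f r => [//|f IH] r; rewrite psegsS /=.
case: ifP => // hne; case: ifP => [_ /mem_take /drop_row //|_].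
rewrite mem_cat => /orP [/mem_take /drop_row //|/IH h].
have := last_in (negbT hne) => /mem_take /drop_row; lia.
Qed.

Lemma psegs_uniq f (r : nat) : uniq (psegs p s f (find (row r) rs)).
Proof.
elim: f r => [//|f IH] r; rewrite psegsS /=.
have hu : uniq (take p (drop (find (row r) rs) rs)) by apply: take_uniq; apply: drop_uniq; exact: rs_uniq.
case: ifP => // hne; case: ifP => // _.
rewrite cat_uniq hu IH andbT /=; apply/hasP => -[x hx1 hx2].
have h1 : (last (0,0) (take p (drop (find (row r) rs) rs))).1.+1 <= x.1 := psegs_row hx1.
have h2 : x.1 <= (last (0,0) (take p (drop (find (row r) rs) rs))).1 := lastmax (seg_pw _) hx2.
lia.
Qed.

Lemma high f (r : nat) : k < r ->
  count up (psegs p s f (find (row r) rs)) = 0 /\ d \notin psegs p s f (find (row r) rs).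
Proof.
move=> hr; split.
  rewrite (eq_in_count (a2 := pred0)) ?count_pred0 // => x hx /=.
  have h1 : r <= x.1 := psegs_row hx.
  case E: (up x) => //; have h2 : x.1 <= k := up_row (psegs_sub hx) E; lia.
by apply/negP => /psegs_row; rewrite /d /=; lia.
Qed.

Lemma main f (r : nat) : 1 <= r ->
  (d \notin psegs p s f (find (row r) rs) -> p %| count up (psegs p s f (find (row r) rs))) /\
  (d \in psegs p s f (find (row r) rs) -> exists r' m, 1 <= r' <= k /\
       count up (psegs p s f (find (row r) rs)) = c r' + p * m).
Proof.
elim: f r => [|f IH] r hr; first by split => [_|]; rewrite /= ?dvdn0 ?in_nil.
case: (leqP r k) => hrk; last first.
  have [h1 h2] := high f.+1 hrk; rewrite h1; split => [_|hd]; [exact: dvdn0 | by rewrite hd in h2].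
have [hst hsz] := pos (introT andP (conj hr hrk)).
set st := find (row r) rs in hst hsz *.
have [P' EP] := Pl_last.
have hu : uniq Pl by apply: filter_uniq; exact: rs_uniq.
have hdP' : d \notin P' by move: hu; rewrite EP rcons_uniq => /andP [].
have hsP' : size Pl = (size P').+1 by rewrite EP size_rcons.
have hupP : forall x, x \in Pl -> up x by move=> x; rewrite mem_filter => /andP [].
have hupQ : forall x, x \in Ql -> up x = false by move=> x; rewrite mem_filter => /andP [/negbTE].
have Eseg : take p (drop st rs) = take p (drop st Pl ++ Ql) by rewrite {1}rs_split drop_cat hst.
have hc1 : 1 <= c r by rewrite /c; lia.
rewrite psegsS /=; rewrite Eseg.
case: (leqP (c r) p) => hcp.
  (* the diagonal is reached in this segment *)
  have E : take p (drop st Pl ++ Ql) = drop st Pl ++ take (p - c r) Ql.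
    by rewrite take_cat size_drop hsz ltnNge hcp.
  rewrite E.
  have hdin : d \in drop st Pl ++ take (p - c r) Ql.
    by rewrite mem_cat EP drop_rcons ?mem_rcons ?inE ?eqxx //; lia.
  have hne : (drop st Pl ++ take (p - c r) Ql == [::]) = false.
    by apply/negbTE; apply/eqP => h; rewrite h in hdin.
  have hcnt : count up (drop st Pl ++ take (p - c r) Ql) = c r.
    rewrite count_cat (eq_in_count (a1 := up) (a2 := predT) (s := drop st Pl)); last first.
      by move=> x /mem_drop /hupP ->.
    rewrite (eq_in_count (a1 := up) (a2 := pred0) (s := take _ Ql)); last first.
      by move=> x /mem_take /hupQ ->.
    by rewrite count_predT count_pred0 size_drop hsz addn0.
  rewrite hne; case: ifP => _.
    split => [hn|_]; first by rewrite hdin in hn.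
    by exists r, 0; rewrite hcnt muln0 addn0 hr hrk.
  have hpw : pairwise ltn_node (drop st Pl ++ take (p - c r) Ql).
    by rewrite -E -Eseg; apply: seg_pw.
  have hlk := lastmax hpw hdin; rewrite /d /= in hlk.
  have [h1 h2] := high f (r := (last (0, 0) (drop st Pl ++ take (p - c r) Ql)).1.+1) ltac:(lia).
  rewrite count_cat h1 addn0 hcnt; split; first by rewrite mem_cat hdin.
  by move=> _; exists r, 0; rewrite muln0 addn0 hr hrk.
(* the segment is a full p-segment above the diagonal *)
have E : take p (drop st Pl ++ Ql) = take p (drop st P').
  rewrite takel_cat; last by rewrite size_drop hsz; lia.
  rewrite EP drop_rcons; last by lia.
  by rewrite -cats1 takel_cat // size_drop; lia.
rewrite E.
have hsize : size (take p (drop st P')) = p by rewrite size_take size_drop; case: ifP => //; lia.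
have hdnot : d \notin take p (drop st P').
  by apply/negP => /mem_take /mem_drop; apply/negP.
have hcnt : count up (take p (drop st P')) = p.
  rewrite (eq_in_count (a2 := predT)) ?count_predT // => x /mem_take /mem_drop hx.
  by apply: hupP; rewrite EP mem_rcons inE hx orbT.
have hne : (take p (drop st P') == [::]) = false.
  by apply/negbTE; apply/eqP => h; rewrite h /= in hsize; lia.
rewrite hne; case: ifP => _.
  by split => [_|]; [rewrite hcnt dvdnn|rewrite (negbTE hdnot)].
have [IH1 IH2] := IH ((last (0, 0) (take p (drop st P'))).1.+1) isT.
rewrite count_cat hcnt mem_cat (negbTE hdnot) /=; split.
  by move=> h; rewrite dvdn_addr ?dvdnn //; apply: IH1.
move=> h; have [r' [m [h1 h2]]] := IH2 h; exists r', m.+1; split => //.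
rewrite h2 mulnS; lia.
Qed.

End Main.

Lemma find1 p s : is_partition s -> 0 < size s -> 0 < p ->
  find (fun x : node => x.1 == 1) (rim_seq s) = 0.
Proof.
move=> hps hsz hp.
have [hk1 _] := kdiag_spec hps hsz.
have [h1 h2] := @pos p s hps hsz hp 1 (introT andP (conj isT hk1)).
have hc := @count_up s hps hsz 1 (introT andP (conj isT hk1)).
have hp1 := @part_pos s hps hsz 1 (introT andP (conj isT hsz)).
have E : size (Pl s) = part s 1.
  rewrite /Pl /= size_filter.
  transitivity (count (fun x : node => (x.1 <= x.2) && (1 <= x.1)) (rim_seq s)); last by rewrite hc; lia.
  apply: eq_in_count => x hx /=.
  by rewrite (rim_row hps hsz hx) andbT.
move: h1 h2; rewrite E /=; lia.
Qed.

Lemma arA0 r k : 0 < r <= k -> 1 <= r < 1 + k.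
Proof. lia. Qed.
Lemma arA1 a r : r <= a -> a + a + 1 - r - r = 2 * a + 1 - 2 * r.
Proof. lia. Qed.
Lemma arA2 cnt u (b : bool) : cnt + b = u -> (b -> 0 < u) -> ((cnt + u) %% 2 = 0 <-> ~~ b).
Proof. case: b => /= h1 h2; [have := h2 isT|]; split => //; lia. Qed.
Lemma arA3 cnt u a r m p : cnt + 1 = u -> u = a - r + 1 + p * m -> r <= a ->
  cnt + u = (2 * a + 1 - 2 * r) + p * (2 * m).
Proof. lia. Qed.

Unset Implicit Arguments.
Set Strict Implicit.

Theorem corollary3p21 (p : nat) (s : seq nat) :
  prime p -> odd p -> 0 < size s -> BG_partition p s ->
  [<-> eps_star p s = 0;
       ~~ odd (a_star p s);
       (forall i : nat, (i, i) \notin rim_star p s);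
       p %| a_star p s].
Proof.
move=> hpr hodd hsz /and3P [hps hsc hall].
have hp : 0 < p := prime_gt0 hpr.
have E0 := find1 hps hsz hp.
have M : ((kdiag s, kdiag s) \notin prim p s -> p %| count (fun x : node => x.1 <= x.2) (prim p s)) /\
         ((kdiag s, kdiag s) \in prim p s -> exists r' m : nat, 0 < r' <= kdiag s /\
            count (fun x : node => x.1 <= x.2) (prim p s) = part s r' - r' + 1 + p * m).
  have := @main p s hps hsz hp (size (rim_seq s)).+1 1 isT.
  by rewrite (_ : find ((fun (r0 : nat) (x : node) => x.1 == r0) 1) (rim_seq s) = 0).
have Hu : uniq (prim p s).
  have := @psegs_uniq p s hps hsz hp (size (rim_seq s)).+1 1.
  by rewrite (_ : find ((fun (r0 : nat) (x : node) => x.1 == r0) 1) (rim_seq s) = 0).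
have Hsub : forall x, x \in prim p s -> x \in rim_seq s.
  move=> x hx; exact: (@psegs_sub p s (size (rim_seq s)).+1 0 x hx).
set d := (kdiag s, kdiag s) in M.
have hdrs : d \in rim_seq s := @d_in p s hps hsz hp.
set U := U_set p s.
have hUu : uniq U by apply: filter_uniq.
have memU : forall x, (x \in U) = (x \in prim p s) && (x.1 <= x.2) by move=> x; rewrite mem_filter andbC.
have hdU : (d \in U) = (d \in prim p s) by rewrite memU /= leqnn andbT.
have hLU : forall x, x \in U -> (x \in L_set p s) = (x == d).
  move=> x hx; apply/idP/idP.
    case/mapP => y hy ex; subst x; move: hx hy; rewrite !memU => /andP [_ h1] /andP [hy h2].
    have := @diag_d p s hps hsz hp y (Hsub _ hy); move: h1 h2 => /= h1 h2.
    have e : y.1 = y.2 by apply/eqP; rewrite eqn_leq; apply/andP; split; assumption.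
    move=> h; rewrite (h e) /d /=; exact: eqxx.
  by move/eqP => e; subst x; apply/mapP; exists d.
have hVu : uniq (L_set p s).
  rewrite /L_set map_inj_uniq //; by move=> [a1 b1] [a2 b2] /= [-> ->].
have Ha : a_star p s = count (fun x => x != d) U + size U.
  rewrite /a_star /rim_star undup_cat (undup_id hUu) (undup_id hVu) size_cat size_filter.
  rewrite /L_set size_map -/(L_set p s); congr (_ + _).
  by apply: eq_in_count => x hx /=; rewrite hLU.
have hcnt : count (fun x => x != d) U + (d \in prim p s) = size U.
  rewrite -hdU -(count_uniq_mem d hUu) addnC; exact: (count_predC (pred1 d) U).
have hsU : size U = count (fun x : node => x.1 <= x.2) (prim p s) by rewrite size_filter.
have hb1 : d \in prim p s -> 0 < size U.
  by move=> h; rewrite -hdU in h; case: (U) h.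
have hstar : (forall i : nat, (i, i) \notin rim_star p s) <-> (d \notin prim p s).
  split.
    by move=> h; have := h (kdiag s); rewrite /rim_star mem_undup mem_cat -/U hdU; case: (d \in prim p s).
  move=> hn i; rewrite /rim_star mem_undup mem_cat -/U; apply/negP => /orP h.
  have hi : (i, i) \in U.
    case: h => // /mapP [y hy ey]; move: ey hy; case: y => a b /= [-> ->] //.
  move: hi; rewrite memU => /andP [hi _].
  have := @diag_d p s hps hsz hp (i, i) (Hsub _ hi) erefl.
  by move=> e; rewrite e in hi; rewrite hi in hn.
have hook_ok : forall r, 0 < r <= kdiag s -> ~~ (p %| 2 * part s r + 1 - 2 * r).
  move=> r hr.
  have hin : r \in iota 1 (kdiag s) by rewrite mem_iota; exact: arA0.
  have h : ~~ (p %| hook s r r) := allP hall r hin.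
  have e : hook s r r = 2 * part s r + 1 - 2 * r.
    rewrite /hook (eqP hsc); apply: arA1; have := @lam_le_k s hps hsz r hr; have [_ hk] := andP hr; exact: leq_trans.
  by rewrite -e.
have key1 : (eps_star p s = 0) <-> (d \notin prim p s).
  rewrite /eps_star Ha; apply: arA2 => //; exact: hb1.
have key2 : (~~ odd (a_star p s)) <-> (d \notin prim p s).
  move: key1; rewrite /eps_star modn2.
  case: (odd (a_star p s)) => k1.
    split; first by [].
    by move/k1.
  split; last by [].
  by move=> _; apply/k1.
have key4 : (p %| a_star p s) <-> (d \notin prim p s).
  have [MA MB] := M.
  case E: (d \in prim p s); split => // h.
    have [r' [m [hr' hu]]] := MB E.
    have hl := @lam_le_k s hps hsz r' hr'.
    have : a_star p s = (2 * part s r' + 1 - 2 * r') + p * (2 * m).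
      have h1 : count (fun x => x != d) U + 1 = size U by rewrite -hcnt E.
      have h2 : size U = part s r' - r' + 1 + p * m by rewrite hsU hu.
      rewrite Ha; apply: arA3 h1 h2 _; have [_ hk] := andP hr'; exact: leq_trans hk hl.
    move=> ea; rewrite ea dvdn_addl in h; last by apply: dvdn_mulr.
    by have := hook_ok r' hr'; rewrite h.
  have hdv := MA (negbT E); rewrite -hsU in hdv.
  have h1 : count (fun x => x != d) U = size U by rewrite -hcnt E addn0.
  by rewrite Ha h1; apply: dvdn_add.
tfae.
- by move/key1/key2.
- by move/key2/hstar.
- by move/hstar/key4.
- by move/key4/key1.
Qed.
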